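(* Let $\xi=(\xi_1,\xi_2)$ be uniformly distributed on $\Theta:=([-1,1]\times[0,1])\cup([0,1]\times[-1,0])\subset\mathbb{R}^2$ and let $p=1/3$. Policies are pairs $y=(y_1,y_2(\cdot))$ with $y_1\in\mathbb{R}$ and $y_2:\mathbb{R}\to\mathbb{R}$ Borel measurable, and $h(y):=y_1$. Let $M_1:=\{y: \mathbb{P}(\xi_1\le y_1,\ \xi_2\le y_2(\xi_1))\ge 1/3,\ y_1\in[0,1],\ y_2(\xi_1)\in[0,1]\ \mathbb{P}\text{-a.s.}\}$, $M_2:=\{y:\mathbb{P}(\xi_1\le y_1,\ \xi_2\le y_2(\xi_1),\ y_1\in[0,1],\ y_2(\xi_1)\in[0,1])\ge 1/3\}$, $\Pi(y_1,y_2(\cdot)):=(\max\{0,\min\{y_1,1\}\},\max\{0,\min\{y_2(\cdot),1\}\})$, and $\mathcal{K}:=\{(y_1,y_2): y_1\in\mathbb{R},\ \exists a\ge -1 \text{ with } y_2(\xi_1)=a\xi_1\}$. With $\varphi,\varphi_1,\varphi_2,\varphi_3,\varphi_4$ defined as: $\varphi:=\inf\{h(y):y\in M_1\}$, $\varphi_1:=\inf\{h(y):y\in M_1\cap\mathcal{K}\}$, $\varphi_2:=\inf\{h(z):z\in\Pi(\arg\min\{h(y):y\in M_2\cap\mathcal{K}\})\}$, $\varphi_3:=\inf\{h(y):y\in\Pi(M_2\cap\mathcal{K})\}$, $\varphi_4:=\inf\{h(y):y\in M_1\cap\Pi(\mathcal{K})\}$, one has \[ \varphi=0,\quad \varphi_1=1,\quad\varphi_2=\varphi_3=2/3,\quad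 \varphi_4=1/2. \] Moreover, $(2/3,\tfrac32\xi_1)$ is the unique minimizer of $h$ over $M_2\cap\mathcal{K}$, $\Pi(2/3,\tfrac32\xi_1)=(2/3,\max\{0,\min\{\tfrac32\xi_1,1\}\})$ solves the problem defining $\varphi_3$, and $\varphi_4$ is attained at $(1/2,\max\{0,\min\{-\xi_1,1\}\})=\Pi(1/2,-\xi_1)$. *)

(* Defs.v *)
From Stdlib Require Import Reals.
Open Scope R_scope.

Definition is_glb (S : R -> Prop) (m : R) : Prop :=
  (forall x, S x -> m <= x) /\ (forall m', (forall x, S x -> m' <= x) -> m' <= m).

Definition sigma_algebra (F : (R -> Prop) -> Prop) : Prop :=
  F (fun _ => True) /\
  (forall A, F A -> F (fun x => ~ A x)) /\
  (forall An : nat -> R -> Prop, (forall n, F (An n)) -> F (fun x => exists n, An n x)).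

Definition borel_set (A : R -> Prop) : Prop :=
  forall F, sigma_algebra F -> (forall a b, F (fun x => a < x < b)) -> F A.

Definition borel_measurable (f : R -> R) : Prop :=
  forall B, borel_set B -> borel_set (fun x => B (f x)).

Record rect := mkRect { rx1 : R; rx2 : R; ry1 : R; ry2 : R }.
Definition in_rect (r : rect) (x y : R) : Prop :=
  rx1 r <= x <= rx2 r /\ ry1 r <= y <= ry2 r.
Definition area (r : rect) : R := (rx2 r - rx1 r) * (ry2 r - ry1 r).
Definition proper_rect (r : rect) : Prop := rx1 r <= rx2 r /\ ry1 r <= ry2 r.

Fixpoint area_sum (c : nat -> rect) (N : nat) : R :=
  match N with
  | O => area (c O)
  | S k => area_sum c k + area (c (S k))
  end.

Definition cover_le (A : R -> R -> Prop) (s : R) : Prop :=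
  exists c : nat -> rect,
    (forall n, proper_rect (c n)) /\
    (forall x y, A x y -> exists n, in_rect (c n) x y) /\
    (forall N, area_sum c N <= s).

(* m is the Lebesgue outer measure of A (coincides with Lebesgue measure on
   measurable, e.g. Borel, sets) *)
Definition lebesgue_outer (A : R -> R -> Prop) (m : R) : Prop :=
  is_glb (cover_le A) m.

Definition Theta (x y : R) : Prop :=
  (-1 <= x <= 1 /\ 0 <= y <= 1) \/ (0 <= x <= 1 /\ -1 <= y <= 0).

(* Prob E p : P(xi \in E) = p, i.e. |E cap Theta| / 3 = p *)
Definition Prob (E : R -> R -> Prop) (p : R) : Prop :=
  lebesgue_outer (fun x y => E x y /\ Theta x y) (3 * p).

Definition almost_surely (E : R -> R -> Prop) : Prop :=
  Prob (fun x y => ~ E x y) 0.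

Definition policy : Type := (R * (R -> R))%type.
Definition h (y : policy) : R := fst y.
Definition clamp (t : R) : R := Rmax 0 (Rmin t 1).
Definition Pi (y : policy) : policy := (clamp (fst y), fun t => clamp (snd y t)).

Definition in01 (t : R) : Prop := 0 <= t <= 1.

Definition M1 (y : policy) : Prop :=
  borel_measurable (snd y) /\
  (exists p, Prob (fun x1 x2 => x1 <= fst y /\ x2 <= snd y x1) p /\ 1/3 <= p) /\
  in01 (fst y) /\
  almost_surely (fun x1 _ => in01 (snd y x1)).

Definition M2 (y : policy) : Prop :=
  borel_measurable (snd y) /\
  (exists p, Prob (fun x1 x2 => x1 <= fst y /\ x2 <= snd y x1 /\
                                 in01 (fst y) /\ in01 (snd y x1)) p /\ 1/3 <= p).

Definition K (y : policy) : Prop :=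
  exists a, -1 <= a /\ forall t, snd y t = a * t.

Definition inter (A B : policy -> Prop) (y : policy) : Prop := A y /\ B y.
Definition image_Pi (A : policy -> Prop) (z : policy) : Prop :=
  exists y, A y /\ z = Pi y.
Definition argmin_h (A : policy -> Prop) (y : policy) : Prop :=
  A y /\ forall y', A y' -> h y <= h y'.
Definition hvals (A : policy -> Prop) (v : R) : Prop := exists y, A y /\ v = h y.

Definition phi  (v : R) : Prop := is_glb (hvals M1) v.
Definition phi1 (v : R) : Prop := is_glb (hvals (inter M1 K)) v.
Definition phi2 (v : R) : Prop := is_glb (hvals (image_Pi (argmin_h (inter M2 K)))) v.
Definition phi3 (v : R) : Prop := is_glb (hvals (image_Pi (inter M2 K))) v.
Definition phi4 (v : R) : Prop := is_glb (hvals (inter M1 (image_Pi K))) v.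

(* Main.v *)
Require Import Defs.
From Stdlib Require Import Reals Lra Lia List Classical FunctionalExtensionality PropExtensionality.
Open Scope R_scope.

Definition ov (l r a b : R) := Rmax 0 (Rmin r b - Rmax l a).
Definition ind (l r x w : R) := if Rle_dec l x then if Rle_dec x r then w else 0 else 0.
Definition cntp (a b t : R) : nat := if Rlt_dec a t then if Rlt_dec t b then 1%nat else 0%nat else 0%nat.
Fixpoint sumn (f : nat -> nat) (N : nat) : nat :=
  match N with O => f O | S k => (sumn f k + f (S k))%nat end.
Definition cnt (l r : nat -> R) N a b := sumn (fun n => cntp a b (l n) + cntp a b (r n))%nat N.

Ltac mm := unfold Rmax, Rmin in *; repeat (destruct Rle_dec); try lra.

Lemma ov_add l r a e b : a <= e <= b -> ov l r a e + ov l r e b = ov l r a b.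
Proof. intros; unfold ov; mm. Qed.

Lemma ov_ge0 l r a b : 0 <= ov l r a b.
Proof. unfold ov; mm. Qed.

Lemma ov_le l r a b : l <= r -> ov l r a b <= r - l.
Proof. intros; unfold ov; mm. Qed.

Lemma sumn_le f g N : (forall n, (n <= N)%nat -> (f n <= g n)%nat) -> (sumn f N <= sumn g N)%nat.
Proof. induction N; simpl; intros H. apply H; lia.
  pose proof (IHN (fun n Hn => H n ltac:(lia))). pose proof (H (S N) ltac:(lia)). lia. Qed.

Lemma sumn_lt f g N n0 : (forall n, (n <= N)%nat -> (f n <= g n)%nat) -> (n0 <= N)%nat ->
  (f n0 < g n0)%nat -> (sumn f N < sumn g N)%nat.
Proof. induction N; simpl; intros H H0 H1.
  - replace n0 with 0%nat in H1 by lia. lia.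
  - destruct (Nat.eq_dec n0 (S N)).
    + subst. pose proof (sumn_le f g N (fun n Hn => H n ltac:(lia))). lia.
    + pose proof (IHN (fun n Hn => H n ltac:(lia)) ltac:(lia) H1). pose proof (H (S N) ltac:(lia)). lia.
Qed.

Lemma sumn_ge_term f N n : (n <= N)%nat -> (f n <= sumn f N)%nat.
Proof. induction N; simpl; intros Hn. replace n with 0%nat by lia. lia.
  destruct (Nat.eq_dec n (S N)). subst; lia. pose proof (IHN ltac:(lia)). lia. Qed.

Lemma cntp_mono a b a' b' t : a <= a' -> b' <= b -> (cntp a' b' t <= cntp a b t)%nat.
Proof. intros; unfold cntp; repeat destruct Rlt_dec; try lia; lra. Qed.

Lemma sum_ge0 f N : (forall n, (n <= N)%nat -> 0 <= f n) -> 0 <= sum_f_R0 f N.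
Proof. induction N; simpl; intros H. apply H; lia.
  pose proof (IHN (fun n Hn => H n ltac:(lia))). pose proof (H (S N) ltac:(lia)). lra. Qed.

Lemma sum_ge_term f N n : (forall k, (k <= N)%nat -> 0 <= f k) -> (n <= N)%nat -> f n <= sum_f_R0 f N.
Proof. induction N; simpl; intros H Hn.
  - replace n with 0%nat by lia. lra.
  - destruct (Nat.eq_dec n (S N)).
    + subst. pose proof (sum_ge0 f N (fun k Hk => H k ltac:(lia))). lra.
    + pose proof (IHN (fun k Hk => H k ltac:(lia)) ltac:(lia)). pose proof (H (S N) ltac:(lia)). lra.
Qed.

Lemma FW_aux : forall k N (l r w : nat -> R) W a b,
  (cnt l r N a b <= k)%nat -> a <= b -> (forall n, 0 <= w n) ->
  (forall x, a <= x <= b -> W <= sum_f_R0 (fun n => ind (l n) (r n) x (w n)) N) ->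
  W * (b - a) <= sum_f_R0 (fun n => w n * ov (l n) (r n) a b) N.
Proof.
  induction k; intros N l r w W a b Hc Hab Hw Hp.
  -
    destruct (Req_dec a b) as [E|Hne].
    { subst. rewrite Rminus_diag, Rmult_0_r. apply sum_ge0. intros; apply Rmult_le_pos; auto; apply ov_ge0. }
    assert (Hno : forall n, (n <= N)%nat -> ~ (a < l n < b) /\ ~ (a < r n < b)).
    { intros n Hn. assert (Hs: (cntp a b (l n) + cntp a b (r n) <= 0)%nat).
      { pose proof (sumn_ge_term (fun n => cntp a b (l n) + cntp a b (r n))%nat N n Hn). unfold cnt in Hc. simpl in H. lia. }
      unfold cntp in Hs. split; intro; repeat destruct Rlt_dec; try lia; try lra. }
    set (x := (a+b)/2).
    pose proof (Hp x ltac:(unfold x; lra)) as Hx.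
    apply Rle_trans with (sum_f_R0 (fun n => ind (l n) (r n) x (w n)) N * (b - a)).
    { apply Rmult_le_compat_r; lra. }
    rewrite Rmult_comm, scal_sum. apply sum_Rle. intros n Hn.
    destruct (Hno n Hn) as [H1 H2]. pose proof (Hw n).
    unfold ind; destruct Rle_dec; [destruct Rle_dec|].
    + assert (l n <= a) by (unfold x in *; lra). assert (b <= r n) by (unfold x in *; lra).
      unfold ov. replace (Rmax 0 (Rmin (r n) b - Rmax (l n) a)) with (b - a) by mm. lra.
    + rewrite Rmult_0_l. apply Rmult_le_pos; auto; apply ov_ge0.
    + rewrite Rmult_0_l. apply Rmult_le_pos; auto; apply ov_ge0.
  - destruct (classic (exists n, (n <= N)%nat /\ ((a < l n < b) \/ (a < r n < b)))) as [[n [Hn He]]|Hne].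
    + assert (exists e, a < e < b /\ (e = l n \/ e = r n)) as [e [He1 He2]].
      { destruct He; eauto. }
      assert (Hlt : forall a' b', a <= a' -> b' <= b -> (a' = e \/ b' = e) ->
                 (cnt l r N a' b' < cnt l r N a b)%nat).
      { intros a' b' Ha Hb Hab'. unfold cnt. apply sumn_lt with n; auto.
        - intros m _. pose proof (cntp_mono a b a' b' (l m) Ha Hb). pose proof (cntp_mono a b a' b' (r m) Ha Hb). lia.
        - pose proof (cntp_mono a b a' b' (l n) Ha Hb). pose proof (cntp_mono a b a' b' (r n) Ha Hb).
          assert (cntp a' b' e = 0%nat) by (unfold cntp; repeat destruct Rlt_dec; lra || lia).
          assert (cntp a b e = 1%nat) by (unfold cntp; repeat destruct Rlt_dec; lra || lia).
          destruct He2; rewrite <- H3; lia. }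
      pose proof (IHk N l r w W a e ltac:(pose proof (Hlt a e ltac:(lra) ltac:(lra) ltac:(auto)); lia) ltac:(lra) Hw
                    ltac:(intros; apply Hp; lra)).
      pose proof (IHk N l r w W e b ltac:(pose proof (Hlt e b ltac:(lra) ltac:(lra) ltac:(auto)); lia) ltac:(lra) Hw
                    ltac:(intros; apply Hp; lra)).
      replace (W * (b - a)) with (W * (e - a) + W * (b - e)) by ring.
      replace (fun n0 => w n0 * ov (l n0) (r n0) a b) with
        (fun n0 => w n0 * ov (l n0) (r n0) a e + w n0 * ov (l n0) (r n0) e b).
      2:{ apply functional_extensionality; intro m. rewrite <- (ov_add (l m) (r m) a e b) by lra. ring. }
      rewrite sum_plus. lra.
    +
      apply (IHk N l r w W a b); auto.
      assert (cnt l r N a b = 0%nat); [|lia].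
      unfold cnt. clear -Hne. induction N; simpl.
      * unfold cntp; repeat destruct Rlt_dec; try lia; exfalso; apply Hne; exists 0%nat; split; auto; lra.
      * rewrite IHN. 2:{ intros [m [Hm Hm']]; apply Hne; exists m; split; auto. }
        unfold cntp; repeat destruct Rlt_dec; try lia; exfalso; apply Hne; exists (S N); split; auto; lra.
Qed.

Lemma FW N (l r w : nat -> R) W a b : a <= b -> (forall n, 0 <= w n) ->
  (forall x, a <= x <= b -> W <= sum_f_R0 (fun n => ind (l n) (r n) x (w n)) N) ->
  W * (b - a) <= sum_f_R0 (fun n => w n * ov (l n) (r n) a b) N.
Proof. intros. apply (FW_aux (cnt l r N a b)); auto. Qed.
Lemma CPT (a b : R) (G : nat -> R -> Prop) : a <= b ->
  (forall N N' x, (N <= N')%nat -> G N x -> G N' x) ->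
  (forall x, a <= x <= b -> exists N d, 0 < d /\ forall x', Rabs (x' - x) < d -> G N x') ->
  exists N, forall x, a <= x <= b -> G N x.
Proof.
  intros Hab Hm Hl.
  set (S := fun t => a <= t <= b /\ exists N, forall x, a <= x <= t -> G N x).
  assert (HS : exists t, S t).
  { destruct (Hl a ltac:(lra)) as [N [d [Hd HG]]]. exists a. split. lra.
    exists N. intros x Hx. apply HG. replace (x - a) with 0 by lra. rewrite Rabs_R0; lra. }
  assert (Hb : bound S). { exists b. intros t [Ht _]. lra. }
  destruct (completeness S Hb HS) as [s [Hs1 Hs2]].
  destruct HS as [t0 Ht0].
  assert (Has : a <= s). { pose proof (Hs1 t0 Ht0). destruct Ht0; lra. }
  assert (Hsb : s <= b). { apply Hs2. intros t [Ht _]; lra. }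
  destruct (Hl s ltac:(lra)) as [Ns [d [Hd HG]]].
  assert (Ht : exists t, S t /\ s - d < t).
  { apply NNPP; intro Hn. assert (s <= s - d). { apply Hs2. intros t Ht. apply Rnot_lt_le. intro; apply Hn; eauto. } lra. }
  destruct Ht as [t [[Ht1 [Nt HNt]] Ht2]].
  assert (Ht3 : t <= s) by (apply Hs1; split; auto; eauto).
  set (u := Rmin (s + d/2) b).
  assert (Hu : forall x, a <= x <= u -> G (Nat.max Nt Ns) x).
  { intros x Hx. destruct (Rle_dec x t).
    - apply Hm with Nt. lia. apply HNt; lra.
    - apply Hm with Ns. lia. apply HG. unfold u in Hx. pose proof (Rmin_l (s + d/2) b).
      apply Rabs_def1; lra. }
  destruct (Rle_dec b u).
  - exists (Nat.max Nt Ns). intros x Hx; apply Hu. lra.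
  - exfalso. assert (u = s + d/2) by (unfold u, Rmin in *; destruct Rle_dec; lra).
    assert (S u). { split. unfold u in *; lra. eauto. }
    pose proof (Hs1 u H0). lra.
Qed.

Lemma fin_nbhd (xl xr : nat -> R) x N : exists d, 0 < d /\ forall n, (n <= N)%nat -> xl n < x < xr n ->
  forall x', Rabs (x' - x) < d -> xl n < x' < xr n.
Proof.
  induction N.
  - destruct (classic (xl 0%nat < x < xr 0%nat)) as [H|H].
    + exists (Rmin (x - xl 0%nat) (xr 0%nat - x)). split. apply Rmin_glb_lt; lra.
      intros n Hn Hx x' Hx'. replace n with 0%nat in * by lia.
      pose proof (Rmin_l (x - xl 0%nat) (xr 0%nat - x)). pose proof (Rmin_r (x - xl 0%nat) (xr 0%nat - x)).
      apply Rabs_def2 in Hx'. lra.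
    + exists 1. split. lra. intros n Hn Hx. replace n with 0%nat in * by lia. tauto.
  - destruct IHN as [d [Hd HN]].
    destruct (classic (xl (S N) < x < xr (S N))) as [H|H].
    + exists (Rmin d (Rmin (x - xl (S N)) (xr (S N) - x))). split. repeat apply Rmin_glb_lt; lra.
      pose proof (Rmin_l d (Rmin (x - xl (S N)) (xr (S N) - x))). pose proof (Rmin_r d (Rmin (x - xl (S N)) (xr (S N) - x))).
      pose proof (Rmin_l (x - xl (S N)) (xr (S N) - x)). pose proof (Rmin_r (x - xl (S N)) (xr (S N) - x)).
      intros n Hn Hx x' Hx'. destruct (Nat.eq_dec n (S N)).
      * subst. apply Rabs_def2 in Hx'. lra.
      * apply HN; auto. lia. lra.
    + exists d. split; auto. intros n Hn Hx. destruct (Nat.eq_dec n (S N)). subst; tauto. apply HN; auto; lia.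
Qed.

Definition xl (c : nat -> rect) (dl : nat -> R) n := rx1 (c n) - dl n.
Definition xr (c : nat -> rect) (dl : nat -> R) n := rx2 (c n) + dl n.
Definition yl (c : nat -> rect) (dl : nat -> R) n := ry1 (c n) - dl n.
Definition yr (c : nat -> rect) (dl : nat -> R) n := ry2 (c n) + dl n.

Lemma LBS (c : nat -> rect) (dl : nat -> R) a b cc dd : (forall n, proper_rect (c n)) -> (forall n, 0 < dl n) -> a <= b -> cc <= dd ->
  (forall x y, a <= x <= b -> cc <= y <= dd -> exists n, in_rect (c n) x y) ->
  exists N0, forall N, (N0 <= N)%nat ->
    (b - a) * (dd - cc) <= sum_f_R0 (fun n => ((yr c dl) n - (yl c dl) n) * ov ((xl c dl) n) ((xr c dl) n) a b) N.
Proof.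
  intros Hp Hd Hab Hcd Hcov.
  assert (HA : forall x, a <= x <= b -> exists N, forall y, cc <= y <= dd ->
             exists n, (n <= N)%nat /\ (xl c dl) n < x < (xr c dl) n /\ (yl c dl) n < y < (yr c dl) n).
  { intros x Hx.
    apply (CPT cc dd (fun N y => exists n, (n <= N)%nat /\ (xl c dl) n < x < (xr c dl) n /\ (yl c dl) n < y < (yr c dl) n)); auto.
    - intros N N' y HN [n [Hn H]]. exists n; split; auto; lia.
    - intros y Hy. destruct (Hcov x y Hx Hy) as [n [Hx1 Hy1]].
      pose proof (Hd n).
      exists n, (Rmin (y - (yl c dl) n) ((yr c dl) n - y)). unfold xl, xr, yl, yr in *. split.
      apply Rmin_glb_lt; lra.
      intros y' Hy'. exists n. split; auto. apply Rabs_def2 in Hy'.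
      pose proof (Rmin_l (y - (ry1 (c n) - dl n)) (ry2 (c n) + dl n - y)).
      pose proof (Rmin_r (y - (ry1 (c n) - dl n)) (ry2 (c n) + dl n - y)). lra. }
  assert (HB : exists N, forall x, a <= x <= b -> forall y, cc <= y <= dd ->
             exists n, (n <= N)%nat /\ (xl c dl) n < x < (xr c dl) n /\ (yl c dl) n < y < (yr c dl) n).
  { apply (CPT a b (fun N x => forall y, cc <= y <= dd ->
             exists n, (n <= N)%nat /\ (xl c dl) n < x < (xr c dl) n /\ (yl c dl) n < y < (yr c dl) n)); auto.
    - intros N N' x HN H y Hy. destruct (H y Hy) as [n [Hn H']]. exists n; split; auto; lia.
    - intros x Hx. destruct (HA x Hx) as [N HN]. destruct (fin_nbhd (xl c dl) (xr c dl) x N) as [d [Hd' Hnb]].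
      exists N, d. split; auto. intros x' Hx' y Hy. destruct (HN y Hy) as [n [Hn [H1 H2]]].
      exists n. split; [exact Hn|]. split; [apply (Hnb n Hn H1 x' Hx')|exact H2]. }
  destruct HB as [N0 HN0]. exists N0. intros N HN.
  rewrite Rmult_comm.
  apply FW; auto.
  - intros n. pose proof (Hd n). pose proof (Hp n). unfold proper_rect, yr, yl in *. lra.
  - intros x Hx.
    assert (Hin := FW N (yl c dl) (yr c dl) (fun n => ind ((xl c dl) n) ((xr c dl) n) x 1) 1 cc dd Hcd).
    assert (Hw : forall n, 0 <= ind ((xl c dl) n) ((xr c dl) n) x 1). { intros; unfold ind; repeat destruct Rle_dec; lra. }
    specialize (Hin Hw).
    assert (Hpt : forall y, cc <= y <= dd -> 1 <= sum_f_R0 (fun n => ind ((yl c dl) n) ((yr c dl) n) y (ind ((xl c dl) n) ((xr c dl) n) x 1)) N).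
    { intros y Hy. destruct (HN0 x Hx y Hy) as [n [Hn [H1 H2]]].
      eapply Rle_trans; [|apply (sum_ge_term _ N n)].
      - unfold ind; repeat destruct Rle_dec; lra.
      - intros k _. unfold ind; repeat destruct Rle_dec; lra.
      - lia. }
    specialize (Hin Hpt). rewrite Rmult_1_l in Hin. eapply Rle_trans; [apply Hin|].
    apply sum_Rle. intros n _. pose proof (Hd n). pose proof (Hp n).
    assert ((yl c dl) n <= (yr c dl) n) by (unfold proper_rect, yr, yl in *; lra).
    pose proof (ov_le ((yl c dl) n) ((yr c dl) n) cc dd H1). pose proof (ov_ge0 ((yl c dl) n) ((yr c dl) n) cc dd).
    unfold ind; repeat destruct Rle_dec; nra.
Qed.


Fixpoint sumK (f : nat -> R) (K : nat) : R := match K with O => 0 | S k => sumK f k + f k end.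

Lemma sumK_le f g K : (forall k, (k < K)%nat -> f k <= g k) -> sumK f K <= sumK g K.
Proof. induction K; simpl; intros H. lra. pose proof (IHK (fun k Hk => H k ltac:(lia))). pose proof (H K ltac:(lia)). lra. Qed.

Lemma sumK_ext f g K : (forall k, (k < K)%nat -> f k = g k) -> sumK f K = sumK g K.
Proof. induction K; simpl; intros H. lra. rewrite (IHK (fun k Hk => H k ltac:(lia))), (H K ltac:(lia)). lra. Qed.

Lemma sum_zero N : sum_f_R0 (fun _ => 0) N = 0.
Proof. induction N; simpl; lra. Qed.

Lemma sumK_exch (g : nat -> nat -> R) K N :
  sumK (fun k => sum_f_R0 (fun n => g k n) N) K = sum_f_R0 (fun n => sumK (fun k => g k n) K) N.
Proof. induction K; simpl. rewrite sum_zero; lra.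
  rewrite IHK, <- sum_plus. reflexivity. Qed.

Lemma mono_0 (a : nat -> R) K : (forall k, (k < K)%nat -> a k <= a (S k)) -> forall k, (k <= K)%nat -> a 0%nat <= a k.
Proof. intros H k Hk; induction k. lra. pose proof (H k ltac:(lia)). pose proof (IHk ltac:(lia)). lra. Qed.

Lemma sumK_ov l r (a : nat -> R) K : (forall k, (k < K)%nat -> a k <= a (S k)) ->
  sumK (fun k => ov l r (a k) (a (S k))) K = ov l r (a 0%nat) (a K).
Proof. induction K; simpl; intros H. unfold ov; mm.
  rewrite IHK by (intros; apply H; lia). apply ov_add. split. apply (mono_0 a (S K)); auto. apply H; lia. Qed.

Lemma sumK_scal c f K : sumK (fun k => c * f k) K = c * sumK f K.
Proof. induction K; simpl. ring. rewrite IHK; ring. Qed.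

Lemma area_sum_eq c N : area_sum c N = sum_f_R0 (fun n => area (c n)) N.
Proof. induction N; simpl; auto. rewrite IHN; auto. Qed.

Lemma geom_sum eps N : sum_f_R0 (fun n => eps * (/2)^(S n)) N = eps * (1 - (/2)^(S N)).
Proof. induction N. simpl; field.
  replace (sum_f_R0 _ (S N)) with (sum_f_R0 (fun n => eps * (/2)^(S n)) N + eps*(/2)^(S (S N))) by reflexivity.
  rewrite IHN. simpl. field. Qed.

Lemma pow_half_pos n : 0 < (/2)^n.
Proof. apply pow_lt; lra. Qed.

Lemma LBM (A : R -> R -> Prop) (a cl dh : nat -> R) K s :
  (forall k, (k < K)%nat -> a k <= a (S k)) -> (forall k, (k < K)%nat -> cl k <= dh k) ->
  (forall k x y, (k < K)%nat -> a k <= x <= a (S k) -> cl k <= y <= dh k -> A x y) ->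
  cover_le A s -> sumK (fun k => (a (S k) - a k) * (dh k - cl k)) K <= s.
Proof.
  intros Ha Hcd HA [c [Hp [Hc Hs]]].
  apply Rle_plus_epsilon. intros eps Heps.
  set (e := fun n => eps * (/2)^(S n)).
  set (D := fun n => 2 * ((rx2 (c n) - rx1 (c n)) + (ry2 (c n) - ry1 (c n))) + 4).
  set (dl := fun n => e n / (D n + e n)).
  assert (He : forall n, 0 < e n). { intros; unfold e. pose proof (pow_half_pos (S n)). nra. }
  assert (HD : forall n, 4 <= D n). { intros; unfold D. destruct (Hp n). nra. }
  assert (Hdl : forall n, 0 < dl n). { intros; unfold dl. pose proof (He n); pose proof (HD n). apply Rdiv_lt_0_compat; lra. }
  assert (Har : forall n, (xr c dl n - xl c dl n) * (yr c dl n - yl c dl n) <= area (c n) + e n).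
  { intros n. unfold xr, xl, yr, yl, area. pose proof (He n). pose proof (HD n). destruct (Hp n).
    assert (Hh1 : dl n * D n <= e n).
    { unfold dl. unfold Rdiv. rewrite Rmult_assoc, (Rmult_comm _ (D n)), <- Rmult_assoc.
      apply Rmult_le_reg_r with (D n + e n). lra. rewrite Rmult_assoc, Rinv_l by lra. nra. }
    assert (Hh2 : dl n <= 1). { unfold dl. apply Rmult_le_reg_r with (D n + e n). lra.
      unfold Rdiv. rewrite Rmult_assoc, Rinv_l by lra. lra. }
    pose proof (Hdl n). unfold D in Hh1. nra. }
  assert (Hstrips : forall K', (K' <= K)%nat -> exists N, forall k, (k < K')%nat ->
     (a (S k) - a k) * (dh k - cl k) <= sum_f_R0 (fun n => (yr c dl n - yl c dl n) * ov (xl c dl n) (xr c dl n) (a k) (a (S k))) N).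
  { induction K'; intros HK'.
    - exists 0%nat. intros; lia.
    - destruct (IHK' ltac:(lia)) as [N1 HN1].
      destruct (LBS c dl (a K') (a (S K')) (cl K') (dh K') Hp Hdl (Ha K' ltac:(lia)) (Hcd K' ltac:(lia)))
        as [N2 HN2].
      { intros x y Hx Hy. apply Hc. apply (HA K'); auto; lia. }
      exists (Nat.max N1 N2). intros k Hk. destruct (Nat.eq_dec k K').
      + subst. apply HN2. lia.
      + eapply Rle_trans. apply HN1. lia.
        clear HN1 HN2. assert (HN : (N1 <= Nat.max N1 N2)%nat) by lia. revert HN. generalize (Nat.max N1 N2).
        intros N HN. induction HN. lra. simpl. eapply Rle_trans. apply IHHN.
        pose proof (ov_ge0 (xl c dl (S m)) (xr c dl (S m)) (a k) (a (S k))).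
        pose proof (Hdl (S m)). pose proof (Hp (S m)). unfold yr, yl, proper_rect in *. nra. }
  destruct (Hstrips K (le_n K)) as [N HN].
  eapply Rle_trans. apply sumK_le. intros k Hk. apply (HN k Hk).
  rewrite sumK_exch.
  eapply Rle_trans. apply sum_Rle. intros n _. rewrite sumK_scal, sumK_ov by auto.
  apply Rle_trans with ((yr c dl n - yl c dl n) * (xr c dl n - xl c dl n)).
  { pose proof (Hdl n); pose proof (Hp n). unfold proper_rect, yr, yl, xr, xl in *.
    apply Rmult_le_compat_l. lra. apply ov_le. lra. }
  rewrite Rmult_comm. apply Har.
  rewrite sum_plus. pose proof (Hs N). rewrite area_sum_eq in H. pose proof (geom_sum eps N) as G. change (sum_f_R0 (fun n => e n) N = eps * (1 - (/2)^(S N))) in G.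
  pose proof (pow_half_pos (S N)). assert (0 <= eps * (/2)^(S N)) by (apply Rmult_le_pos; lra). change (sum_f_R0 e N = eps * (1 - (/2)^(S N))) in G. lra.
Qed.

Definition dR := mkRect 0 0 0 0.
Definition list_area (l : list rect) := fold_right (fun r acc => area r + acc) 0 l.

Lemma area_ge0 r : proper_rect r -> 0 <= area r.
Proof. unfold proper_rect, area; intros; nra. Qed.

Lemma list_area_ge0 l : (forall r, In r l -> proper_rect r) -> 0 <= list_area l.
Proof. induction l; simpl; intros H. lra. pose proof (area_ge0 a (H a (or_introl eq_refl))).
  pose proof (IHl (fun r Hr => H r (or_intror Hr))). lra. Qed.

Lemma sum_nth_le l N : (forall r, In r l -> proper_rect r) ->
  sum_f_R0 (fun n => area (nth n l dR)) N <= list_area l.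
Proof.
  revert N; induction l; intros N H.
  - simpl. rewrite (sum_eq _ (fun _ => 0)). rewrite sum_zero; lra. intros i _. destruct i; unfold dR, area; simpl; ring.
  - destruct N. simpl. pose proof (list_area_ge0 l (fun r Hr => H r (or_intror Hr))). lra.
    rewrite decomp_sum by lia. simpl. pose proof (IHl N (fun r Hr => H r (or_intror Hr))). lra.
Qed.

Lemma cover_list A l : (forall r, In r l -> proper_rect r) ->
  (forall x y, A x y -> exists r, In r l /\ in_rect r x y) -> cover_le A (list_area l).
Proof.
  intros Hp Hc. exists (fun n => nth n l dR). split; [|split].
  - intros n. destruct (nth_in_or_default n l dR) as [H|H]. auto. rewrite H. unfold dR, proper_rect; simpl; lra.
  - intros x y Hxy. destruct (Hc x y Hxy) as [r [Hr Hin]]. destruct (In_nth l r dR Hr) as [n [_ Hn]].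
    exists n. rewrite Hn; auto.
  - intros N. rewrite area_sum_eq. apply sum_nth_le; auto.
Qed.

Lemma UB A l m : (forall r, In r l -> proper_rect r) ->
  (forall x y, A x y -> exists r, In r l /\ in_rect r x y) -> lebesgue_outer A m -> m <= list_area l.
Proof. intros Hp Hc [Hm _]. apply Hm. apply cover_list; auto. Qed.

Lemma cover_ge0 A s : cover_le A s -> 0 <= s.
Proof. intros [c [Hp [_ Hs]]]. pose proof (Hs 0%nat). simpl in H. pose proof (area_ge0 _ (Hp 0%nat)). lra. Qed.

Lemma outer_exists A : (exists s, cover_le A s) -> exists m, lebesgue_outer A m.
Proof.
  intros Hne. set (E := fun t => exists s, cover_le A s /\ t = - s).
  assert (Hb : bound E). { exists 0. intros t [s [Hs ->]]. pose proof (cover_ge0 A s Hs). lra. }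
  assert (He : exists t, E t). { destruct Hne as [s Hs]. exists (-s), s; auto. }
  destruct (completeness E Hb He) as [l [Hl1 Hl2]].
  exists (-l). split.
  - intros s Hs. pose proof (Hl1 (-s) (ex_intro _ s (conj Hs eq_refl))). lra.
  - intros m' Hm'. assert (l <= - m'). { apply Hl2. intros t [s [Hs ->]]. pose proof (Hm' s Hs). lra. } lra.
Qed.

Lemma Prob_exists E : exists p, Prob E p.
Proof.
  destruct (outer_exists (fun x y => E x y /\ Theta x y)) as [m Hm].
  { exists (list_area (mkRect (-1) 1 (-1) 1 :: nil)). apply cover_list.
    - intros r [<-|[]]. unfold proper_rect; simpl; lra.
    - intros x y [_ Ht]. exists (mkRect (-1) 1 (-1) 1). split. left; auto. unfold in_rect, Theta in *; simpl; lra. }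
  exists (m / 3). unfold Prob. replace (3 * (m / 3)) with m by field. auto.
Qed.

Lemma Prob_zero E : (forall x y, Theta x y -> ~ E x y) -> Prob E 0.
Proof.
  intros H. unfold Prob. rewrite Rmult_0_r. split.
  - intros s Hs. apply (cover_ge0 _ s Hs).
  - intros m' Hm'. apply Hm'. replace 0 with (list_area nil) by reflexivity. apply cover_list.
    + intros r [].
    + intros x y [Hx Ht]. exfalso; apply (H x y Ht Hx).
Qed.

Lemma LB_outer (A : R -> R -> Prop) (a cl dh : nat -> R) K m :
  (forall k, (k < K)%nat -> a k <= a (S k)) -> (forall k, (k < K)%nat -> cl k <= dh k) ->
  (forall k x y, (k < K)%nat -> a k <= x <= a (S k) -> cl k <= y <= dh k -> A x y) ->
  lebesgue_outer A m -> sumK (fun k => (a (S k) - a k) * (dh k - cl k)) K <= m.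
Proof. intros H1 H2 H3 [_ Hm]. apply Hm. intros s Hs. apply LBM with A; auto. Qed.

Lemma LB_rect (A : R -> R -> Prop) x0 x1 y0 y1 m : x0 <= x1 -> y0 <= y1 ->
  (forall x y, x0 <= x <= x1 -> y0 <= y <= y1 -> A x y) -> lebesgue_outer A m -> (x1 - x0) * (y1 - y0) <= m.
Proof.
  intros. pose proof (LB_outer A (fun k => match k with O => x0 | _ => x1 end) (fun _ => y0) (fun _ => y1) 1 m).
  simpl in H3. replace ((x1 - x0) * (y1 - y0)) with (0 + (x1 - x0) * (y1 - y0)) by ring.
  apply H3; auto.
  - intros k Hk. replace k with 0%nat by lia. auto.
  - intros k x y Hk. replace k with 0%nat by lia. auto.
Qed.

Lemma borel_ext (A B : R -> Prop) : (forall x, A x <-> B x) -> borel_set A -> borel_set B.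
Proof. intros H HA. replace B with A; auto. apply functional_extensionality; intro x. apply propositional_extensionality; auto. Qed.

Lemma borel_sigma : sigma_algebra borel_set.
Proof. split; [|split].
  - intros F HF _. apply HF.
  - intros A HA F HF Hi. apply HF. apply HA; auto.
  - intros An HAn F HF Hi. apply HF. intros n; apply HAn; auto.
Qed.

Lemma borel_compl A : borel_set A -> borel_set (fun x => ~ A x).
Proof. intros HA F HF Hi. apply HF. apply HA; auto. Qed.

Lemma borel_union (An : nat -> R -> Prop) : (forall n, borel_set (An n)) -> borel_set (fun x => exists n, An n x).
Proof. intros HAn F HF Hi. apply HF. intros n; apply HAn; auto. Qed.

Lemma borel_True : borel_set (fun _ => True).
Proof. intros F HF _. apply HF. Qed.

Lemma borel_False : borel_set (fun _ => False).
Proof. apply (borel_ext (fun x => ~ True)). tauto. apply borel_compl, borel_True. Qed.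

Lemma borel_and (A B : R -> Prop) : borel_set A -> borel_set B -> borel_set (fun x => A x /\ B x).
Proof.
  intros HA HB.
  apply (borel_ext (fun x => ~ exists n, (match n with O => ~ A x | _ => ~ B x end))).
  { intros x; split.
    - intros H. split; apply NNPP; intro; apply H. exists 0%nat; auto. exists 1%nat; auto.
    - intros [H1 H2] [n Hn]. destruct n; auto. }
  apply borel_compl. apply (borel_union (fun n x => match n with O => ~ A x | _ => ~ B x end)).
  intros n. destruct n; apply borel_compl; auto.
Qed.

Lemma nat_above r : exists n, r < INR n.
Proof.
  destruct (Rle_dec r 0). exists 1%nat. simpl; lra.
  destruct (archimed_cor1 (/ r)) as [N [HN HN0]]. apply Rinv_0_lt_compat; lra.
  exists N. apply Rnot_le_lt; intro. assert (0 < INR N) by (apply lt_0_INR; auto).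
  pose proof (Rinv_le_contravar (INR N) r H0 H). lra.
Qed.

Lemma borel_lt c : borel_set (fun x => x < c).
Proof.
  apply (borel_ext (fun x => exists n, (fun m => c - INR m - 1 < x < c) n)).
  { intros x; split. intros [n Hn]; lra. intros H. destruct (nat_above (c - x)) as [n Hn]. exists n; lra. }
  apply (borel_union (fun m x => _)). intros n F HF Hi. apply Hi.
Qed.

Lemma borel_gt c : borel_set (fun x => c < x).
Proof.
  apply (borel_ext (fun x => exists n, (fun m => c < x < c + INR m + 1) n)).
  { intros x; split. intros [n Hn]; lra. intros H. destruct (nat_above (x - c)) as [n Hn]. exists n; lra. }
  apply (borel_union (fun m x => _)). intros n F HF Hi. apply Hi.
Qed.

Lemma meas_of (f : R -> R) : (forall a b, borel_set (fun x => a < f x < b)) -> borel_measurable f.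
Proof.
  intros H B HB. apply (HB (fun B' => borel_set (fun x => B' (f x)))).
  - split; [|split].
    + apply borel_True.
    + intros A HA. apply borel_compl; auto.
    + intros An HAn. apply (borel_union (fun n x => An n (f x))); auto.
  - auto.
Qed.

Lemma meas_const c : borel_measurable (fun _ => c).
Proof. apply meas_of. intros a b. destruct (classic (a < c < b)).
  apply (borel_ext (fun _ => True)). tauto. apply borel_True.
  apply (borel_ext (fun _ => False)). tauto. apply borel_False. Qed.

Lemma meas_lin k : 0 < k -> borel_measurable (fun t => k * t).
Proof. intros Hk. apply meas_of. intros a b.
  apply (borel_ext (fun x => a / k < x < b / k)).
  { intros x. split; intros [H1 H2]; split.
    - apply Rmult_lt_reg_r with (/k). apply Rinv_0_lt_compat; lra.
      replace (k * x * / k) with x by (field; lra). exact H1.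
    - apply Rmult_lt_reg_r with (/k). apply Rinv_0_lt_compat; lra.
      replace (k * x * / k) with x by (field; lra). exact H2.
    - apply Rmult_lt_reg_l with k. lra. replace (k * (a / k)) with a by (field; lra). exact H1.
    - apply Rmult_lt_reg_l with k. lra. replace (k * (b / k)) with b by (field; lra). exact H2. }
  intros F HF Hi. apply Hi.
Qed.

Lemma meas_clampneg : borel_measurable (fun t => Rmax 0 (Rmin (- t) 1)).
Proof. apply meas_of. intros a b. apply borel_and.
  - destruct (Rlt_dec a 0).
    + apply (borel_ext (fun _ => True)). intros x; split; auto; intros _; mm. apply borel_True.
    + destruct (Rlt_dec a 1).
      * apply (borel_ext (fun x => x < - a)). intros x; split; intros; mm. apply borel_lt.
      * apply (borel_ext (fun _ => False)). intros x; split; intros; mm. apply borel_False.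
  - destruct (Rlt_dec 1 b).
    + apply (borel_ext (fun _ => True)). intros x; split; auto; intros _; mm. apply borel_True.
    + destruct (Rlt_dec 0 b).
      * apply (borel_ext (fun x => - b < x)). intros x; split; intros; mm. apply borel_gt.
      * apply (borel_ext (fun _ => False)). intros x; split; intros; mm. apply borel_False.
Qed.

Lemma find_k0 K t : (1 <= K)%nat -> 0 <= t <= INR K -> exists k, (k < K)%nat /\ INR k <= t <= INR (S k).
Proof.
  induction K; intros HK Ht. lia.
  destruct K. exists 0%nat. split. lia. simpl in *. lra.
  destruct (Rle_dec t (INR (S K))).
  - destruct (IHK ltac:(lia) ltac:(lra)) as [k [Hk Hk']]. exists k; split; auto; lia.
  - exists (S K). split. lia. lra.
Qed.

Lemma find_k K x m : (1 <= K)%nat -> 0 <= x <= m ->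
  exists k, (k < K)%nat /\ m * INR k / INR K <= x <= m * INR (S k) / INR K.
Proof.
  intros HK Hx. assert (HKp : 0 < INR K) by (apply lt_0_INR; lia).
  destruct (Req_dec m 0).
  - subst. exists 0%nat. split. lia. replace x with 0 by lra. unfold Rdiv. rewrite !Rmult_0_l. lra.
  - destruct (find_k0 K (x * INR K / m) HK) as [k [Hk [H1 H2]]].
    { split. apply Rmult_le_pos. apply Rmult_le_pos; lra. left; apply Rinv_0_lt_compat; lra.
      apply Rmult_le_reg_r with m. lra. unfold Rdiv. rewrite Rmult_assoc, Rinv_l by lra. nra. }
    exists k. split; auto. split.
    + apply Rmult_le_reg_r with (INR K). lra. unfold Rdiv. rewrite Rmult_assoc, Rinv_l by lra.
      apply Rmult_le_reg_r with (/ m). apply Rinv_0_lt_compat; lra.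
      replace (m * INR k * 1 * / m) with (INR k) by (field; lra). unfold Rdiv in H1. lra.
    + apply Rmult_le_reg_r with (INR K). lra. unfold Rdiv. rewrite Rmult_assoc, Rinv_l by lra.
      apply Rmult_le_reg_r with (/ m). apply Rinv_0_lt_compat; lra.
      replace (m * INR (S k) * 1 * / m) with (INR (S k)) by (field; lra). unfold Rdiv in H2. lra.
Qed.

Lemma list_area_app l1 l2 : list_area (l1 ++ l2) = list_area l1 + list_area l2.
Proof. induction l1; simpl. lra. rewrite IHl1. lra. Qed.

Lemma list_area_map (f : nat -> rect) K : list_area (map f (seq 0 K)) = sumK (fun k => area (f k)) K.
Proof. induction K. reflexivity. rewrite seq_S, map_app, list_area_app, IHK. simpl. lra. Qed.

Lemma sumK_affine al be K : sumK (fun k => al + be * INR k) K = al * INR K + be * (INR K * (INR K - 1) / 2).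
Proof. induction K. simpl. field. simpl sumK. rewrite IHK, S_INR. field. Qed.

Lemma INR_Sk_lt k K : (k < K)%nat -> INR (S k) <= INR K.
Proof. intros; apply le_INR; lia. Qed.

(* increasing triangle: {0<=x<=m, -1<=y<=a x} *)
Definition stripU m a K k := mkRect (m * INR k / INR K) (m * INR (S k) / INR K) (-1) (a * m * INR (S k) / INR K).

Lemma stripsU_area m a K : (1 <= K)%nat ->
  list_area (map (stripU m a K) (seq 0 K)) = m + a * m * m * (INR K + 1) / (2 * INR K).
Proof.
  intros HK. assert (0 < INR K) by (apply lt_0_INR; lia).
  rewrite list_area_map.
  rewrite (sumK_ext _ (fun k => (m / INR K + a * m * m / (INR K * INR K)) + (a * m * m / (INR K * INR K)) * INR k)).
  rewrite sumK_affine. field. lra.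
  intros k _. unfold stripU, area; cbn [rx1 rx2 ry1 ry2]. rewrite S_INR. field. lra.
Qed.

Lemma stripsU_cover m a K x y : (1 <= K)%nat -> 0 <= a -> 0 <= x <= m -> -1 <= y <= a * x ->
  exists r, In r (map (stripU m a K) (seq 0 K)) /\ in_rect r x y.
Proof.
  intros HK Ha Hx Hy. assert (0 < INR K) by (apply lt_0_INR; lia).
  destruct (find_k K x m HK Hx) as [k [Hk [H1 H2]]].
  exists (stripU m a K k). split. apply in_map, in_seq. lia.
  unfold in_rect, stripU; cbn [rx1 rx2 ry1 ry2]. repeat split; try lra.
  replace (a * m * INR (S k) / INR K) with (a * (m * INR (S k) / INR K)) by (field; lra). nra.
Qed.

Lemma stripsU_proper m a K r : (1 <= K)%nat -> 0 <= a -> 0 <= m -> In r (map (stripU m a K) (seq 0 K)) -> proper_rect r.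
Proof.
  intros HK Ha Hm Hr. assert (0 < INR K) by (apply lt_0_INR; lia).
  apply in_map_iff in Hr. destruct Hr as [k [<- _]]. unfold proper_rect, stripU; cbn [rx1 rx2 ry1 ry2]. rewrite S_INR.
  split; unfold Rdiv.
  - apply Rmult_le_compat_r. left; apply Rinv_0_lt_compat; lra. nra.
  - assert (0 <= a * m * (INR k + 1) * / INR K). { apply Rmult_le_pos. pose proof (pos_INR k). apply Rmult_le_pos; nra.
      left; apply Rinv_0_lt_compat; lra. } lra.
Qed.

(* decreasing triangle: {-1<=x<=0, 0<=y<=-x} *)
Definition stripD K k := mkRect (-1 + INR k / INR K) (-1 + INR (S k) / INR K) 0 (1 - INR k / INR K).

Lemma stripsD_area K : (1 <= K)%nat -> list_area (map (stripD K) (seq 0 K)) = (INR K + 1) / (2 * INR K).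
Proof.
  intros HK. assert (0 < INR K) by (apply lt_0_INR; lia).
  rewrite list_area_map.
  rewrite (sumK_ext _ (fun k => / INR K + (- / (INR K * INR K)) * INR k)).
  rewrite sumK_affine. field. lra.
  intros k _. unfold stripD, area; cbn [rx1 rx2 ry1 ry2]. rewrite S_INR. field. lra.
Qed.

Lemma stripsD_cover K x y : (1 <= K)%nat -> -1 <= x <= 0 -> 0 <= y <= - x ->
  exists r, In r (map (stripD K) (seq 0 K)) /\ in_rect r x y.
Proof.
  intros HK Hx Hy. assert (0 < INR K) by (apply lt_0_INR; lia).
  destruct (find_k K (x + 1) 1 HK ltac:(lra)) as [k [Hk [H1 H2]]].
  exists (stripD K k). split. apply in_map, in_seq. lia.
  unfold in_rect, stripD; cbn [rx1 rx2 ry1 ry2]. rewrite Rmult_1_l in H1, H2. repeat split; lra.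
Qed.

Lemma stripsD_proper K r : (1 <= K)%nat -> In r (map (stripD K) (seq 0 K)) -> proper_rect r.
Proof.
  intros HK Hr. assert (0 < INR K) by (apply lt_0_INR; lia).
  apply in_map_iff in Hr. destruct Hr as [k [<- Hk]]. apply in_seq in Hk.
  pose proof (INR_Sk_lt k K ltac:(lia)). rewrite S_INR in H0.
  unfold proper_rect, stripD; cbn [rx1 rx2 ry1 ry2]. rewrite S_INR.
  split; unfold Rdiv.
  - apply Rplus_le_compat_l. apply Rmult_le_compat_r. left; apply Rinv_0_lt_compat; lra. lra.
  - assert (INR k * / INR K <= 1). { apply Rmult_le_reg_r with (INR K). lra. rewrite Rmult_assoc, Rinv_l; lra. } lra.
Qed.

Lemma Theta_ym1 x y : Theta x y -> -1 <= y <= 1 /\ -1 <= x <= 1.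
Proof. unfold Theta; lra. Qed.

Lemma big_K g c : 0 < g -> 0 <= c -> exists K, (1 <= K)%nat /\ c / (2 * INR K) < g.
Proof.
  intros Hg Hc. destruct (nat_above (c / (2 * g))) as [n Hn]. exists (S n). split. lia.
  assert (0 < INR (S n)) by (apply lt_0_INR; lia). rewrite S_INR in *.
  apply Rmult_lt_reg_r with (2 * (INR n + 1)). lra. unfold Rdiv. rewrite Rmult_assoc, Rinv_l by lra.
  assert (c / (2 * g) * (2*g) = c) by (field; lra). unfold Rdiv in H0. nra.
Qed.

Lemma M2K_lower y a : -1 <= a -> (forall t, snd y t = a * t) -> M2 y ->
  2/3 <= fst y /\ (fst y = 2/3 -> a = 3/2).
Proof.
  destruct y as [y1 f]; simpl. intros Ha Hf [_ [p [Hp Hp3]]]. unfold Prob in Hp.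
  assert (Hm : 1 <= 3 * p) by lra. clear Hp3. simpl in Hp.
  destruct (classic (in01 y1)) as [Hy1|Hy1].
  2:{ exfalso. assert (3 * p <= list_area nil). { refine (UB _ nil _ _ _ Hp); [intros r []|].
      intros x y [[_ [_ [H _]]] _]; tauto. } simpl in H. lra. }
  destruct (total_order_T a 0) as [[Hneg|Hz]|Hpos].
  - exfalso.
    pose proof (fun H1 H2 => UB _ (map (stripD 2) (seq 0 2) ++ mkRect 0 0 (-1) 0 :: nil) _ H1 H2 Hp) as HU.
    rewrite list_area_app, stripsD_area in HU by lia.
    assert (Hz : list_area (mkRect 0 0 (-1) 0 :: nil) = 0) by (unfold list_area, area; simpl; ring).
    rewrite Hz in HU. replace (INR 2) with 2 in HU by (simpl; ring).
    assert (3 * p <= (2 + 1) / (2 * 2) + 0); [|lra].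
    apply HU.
    + intros r Hr. apply in_app_or in Hr. destruct Hr as [Hr|[<-|[]]]. apply (stripsD_proper 2); auto.
      unfold proper_rect; simpl; lra.
    + intros x y [[H1 [H2 [_ H4]]] Ht]. rewrite Hf in H2, H4. unfold in01 in H4.
      assert (x <= 0) by nra. unfold Theta in Ht. destruct Ht as [Ht|Ht].
      * destruct (stripsD_cover 2 x y ltac:(lia) ltac:(lra) ltac:(nra)) as [r [Hr Hin]].
        exists r. split; auto. apply in_or_app; auto.
      * exists (mkRect 0 0 (-1) 0). split. apply in_or_app; right; left; auto. unfold in_rect; simpl; lra.
  - subst a.
    pose proof (fun H1 H2 => UB _ (mkRect 0 y1 (-1) 0 :: mkRect (-1) 1 0 0 :: nil) _ H1 H2 Hp) as HU.
    assert (3 * p <= y1); [|unfold in01 in Hy1; assert (y1 = 1) by lra].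
    { assert (Hz : list_area (mkRect 0 y1 (-1) 0 :: mkRect (-1) 1 0 0 :: nil) = y1) by (unfold list_area, area; simpl; ring).
      rewrite Hz in HU.
      apply HU.
      - intros r [<-|[<-|[]]]; unfold proper_rect, in01 in *; simpl; lra.
      - intros x y [[H1 [H2 [_ H4]]] Ht]. rewrite Hf in H2. rewrite Rmult_0_l in H2. unfold Theta in Ht.
        destruct Ht as [Ht|Ht].
        + exists (mkRect (-1) 1 0 0). split. right; left; auto. unfold in_rect; simpl; lra.
        + exists (mkRect 0 y1 (-1) 0). split. left; auto. unfold in_rect; simpl; lra. }
    split. lra. intros; lra.
  - set (mm := Rmin y1 (/ a)).
    assert (Hmm1 : mm <= y1) by apply Rmin_l. assert (Hmm2 : mm <= / a) by apply Rmin_r.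
    assert (Hia : 0 < / a) by (apply Rinv_0_lt_compat; lra).
    assert (Hmm0 : 0 <= mm) by (apply Rmin_glb; unfold in01 in Hy1; lra).
    assert (Ham : a * mm <= 1). { replace 1 with (a * / a) by (field; lra). apply Rmult_le_compat_l; lra. }
    assert (Hgood : 1 <= mm + a * mm * mm / 2).
    { apply Rnot_lt_le. intro Hlt.
      destruct (big_K (1 - (mm + a * mm * mm / 2)) (a * mm * mm) ltac:(lra) ltac:(apply Rmult_le_pos; nra)) as [K [HK HK2]].
      pose proof (fun H1 H2 => UB _ (map (stripU mm a K) (seq 0 K)) _ H1 H2 Hp) as HU.
      rewrite stripsU_area in HU by auto.
      assert (3 * p <= mm + a * mm * mm * (INR K + 1) / (2 * INR K)).
      { apply HU.
        - intros r Hr. apply (stripsU_proper mm a K r HK); auto; lra.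
        - intros x y [[H1 [H2 [_ H4]]] Ht]. rewrite Hf in H2, H4. unfold in01 in H4.
          apply Theta_ym1 in Ht. apply stripsU_cover; auto. lra.
          split. nra. apply Rmin_glb. auto. replace x with ((a * x) * / a) by (field; lra).
          replace (/ a) with (1 * / a) at 2 by ring. apply Rmult_le_compat_r; lra.
          lra. }
      assert (0 < INR K) by (apply lt_0_INR; lia).
      assert (a * mm * mm * (INR K + 1) / (2 * INR K) = a * mm * mm / 2 + a * mm * mm / (2 * INR K)) by (field; lra).
      lra. }
    assert (Hm23 : 2/3 <= mm) by nra.
    split. lra. intros Hy. subst y1.
    assert (mm = 2/3) by lra.
    assert (a <= 3/2) by nra. assert (3/2 <= a) by nra. lra.
Qed.

Lemma INR_div_facts k K : (k < K)%nat -> 0 < INR K /\ 0 <= INR k / INR K /\ INR (S k) / INR K <= 1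
  /\ INR (S k) / INR K = INR k / INR K + / INR K /\ 0 < / INR K.
Proof.
  intros Hk. assert (0 < INR K) by (apply lt_0_INR; lia).
  pose proof (INR_Sk_lt k K Hk). pose proof (pos_INR k).
  split; auto. split. unfold Rdiv; apply Rmult_le_pos; auto; left; apply Rinv_0_lt_compat; lra.
  split. apply Rmult_le_reg_r with (INR K). lra. unfold Rdiv; rewrite Rmult_assoc, Rinv_l; lra.
  split. rewrite S_INR. field. lra. apply Rinv_0_lt_compat; lra.
Qed.

Lemma M2_elem : M2 (2/3, fun t => 3/2 * t).
Proof.
  split. apply meas_lin; lra.
  destruct (Prob_exists (fun x1 x2 => x1 <= fst (2/3, fun t : R => 3/2 * t) /\ x2 <= snd (2/3, fun t : R => 3/2 * t) x1 /\
           in01 (fst (2/3, fun t : R => 3/2 * t)) /\ in01 (snd (2/3, fun t : R => 3/2 * t) x1))) as [p Hp].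
  exists p. split; auto. unfold Prob in Hp. simpl in Hp.
  apply Rnot_lt_le; intro Hlt.
  destruct (big_K (1 - 3 * p) (2/3) ltac:(lra) ltac:(lra)) as [K [HK HK2]].
  assert (0 < INR K) by (apply lt_0_INR; lia).
  pose proof (fun H1 H2 H3 => LB_outer _ (fun k => 2/3 * (INR k / INR K)) (fun _ => -1) (fun k => INR k / INR K) K _ H1 H2 H3 Hp) as HL.
  assert (Hs : sumK (fun k => (2/3 * (INR (S k) / INR K) - 2/3 * (INR k / INR K)) * (INR k / INR K - -1)) K
               = 1 - 2/3 / (2 * INR K)).
  { rewrite (sumK_ext _ (fun k => 2/3 / INR K + (2/3 / (INR K * INR K)) * INR k)).
    rewrite sumK_affine. field. lra.
    intros k _. rewrite S_INR. field. lra. }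
  assert (1 - 2/3 / (2 * INR K) <= 3 * p); [|lra].
  rewrite <- Hs. apply HL.
  - intros k Hk. destruct (INR_div_facts k K Hk) as [_ [H1 [H2 [H3 H4]]]]. lra.
  - intros k Hk. destruct (INR_div_facts k K Hk) as [_ [H1 [H2 [H3 H4]]]]. lra.
  - intros k x y Hk Hx Hy. destruct (INR_div_facts k K Hk) as [_ [H1 [H2 [H3 H4]]]].
    unfold in01, Theta. repeat split; try lra.
Qed.

Lemma M1K_lower y a : (forall t, snd y t = a * t) -> M1 y -> 1 <= fst y.
Proof.
  destruct y as [y1 f]; simpl. intros Hf [_ [[p [Hp Hp3]] [Hy1 Has]]].
  unfold almost_surely, Prob in Has. rewrite Rmult_0_r in Has. unfold Prob in Hp. simpl in Hp.
  assert (a = 0).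
  { destruct (total_order_T a 0) as [[Hn|Hz]|Hpos]; auto; exfalso.
    - pose proof (fun H3 => LB_rect _ (1/2) 1 0 1 0 ltac:(lra) ltac:(lra) H3 Has) as HL.
      assert ((1 - 1/2) * (1 - 0) <= 0); [|lra]. apply HL.
      intros x y Hx Hy. split. rewrite Hf. unfold in01. nra. unfold Theta; lra.
    - pose proof (fun H3 => LB_rect _ (-1) (-1/2) 0 1 0 ltac:(lra) ltac:(lra) H3 Has) as HL.
      assert ((-1/2 - -1) * (1 - 0) <= 0); [|lra]. apply HL.
      intros x y Hx Hy. split. rewrite Hf. unfold in01. nra. unfold Theta; lra. }
  subst a. unfold in01 in Hy1. simpl in Hy1, Has.
  assert (3 * p <= list_area (mkRect 0 y1 (-1) 0 :: mkRect (-1) 1 0 0 :: nil)).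
  { refine (UB _ _ _ _ _ Hp).
    - intros r [<-|[<-|[]]]; unfold proper_rect; simpl; lra.
    - intros x y [[H1 H2] Ht]. rewrite Hf, Rmult_0_l in H2. unfold Theta in Ht. destruct Ht as [Ht|Ht].
      + exists (mkRect (-1) 1 0 0). split. right; left; auto. unfold in_rect; simpl; lra.
      + exists (mkRect 0 y1 (-1) 0). split. left; auto. unfold in_rect; simpl; lra. }
  unfold list_area, area in H; simpl in H. lra.
Qed.

Lemma M1_elem0 : M1 (0, fun _ => 1).
Proof.
  split. apply meas_const. split.
  - destruct (Prob_exists (fun x1 x2 => x1 <= fst (0, fun _ : R => 1) /\ x2 <= snd (0, fun _ : R => 1) x1)) as [p Hp].
    exists p. split; auto. unfold Prob in Hp.
    pose proof (fun H3 => LB_rect _ (-1) 0 0 1 _ ltac:(lra) ltac:(lra) H3 Hp) as HL.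
    assert ((0 - -1) * (1 - 0) <= 3 * p); [|lra]. apply HL.
    intros x y Hx Hy. simpl. unfold Theta; lra.
  - split. unfold in01; simpl; lra. apply Prob_zero. intros x y _ H. apply H. unfold in01; simpl; lra.
Qed.

Lemma M1_elem1 : M1 (1, fun _ => 0).
Proof.
  split. apply meas_const. split.
  - destruct (Prob_exists (fun x1 x2 => x1 <= fst (1, fun _ : R => 0) /\ x2 <= snd (1, fun _ : R => 0) x1)) as [p Hp].
    exists p. split; auto. unfold Prob in Hp.
    pose proof (fun H3 => LB_rect _ 0 1 (-1) 0 _ ltac:(lra) ltac:(lra) H3 Hp) as HL.
    assert ((1 - 0) * (0 - -1) <= 3 * p); [|lra]. apply HL.
    intros x y Hx Hy. simpl. unfold Theta; lra.
  - split. unfold in01; simpl; lra. apply Prob_zero. intros x y _ H. apply H. unfold in01; simpl; lra.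
Qed.

Lemma M1PiK_lower y a : -1 <= a -> (forall t, snd y t = a * t) -> M1 (Pi y) -> 1/2 <= fst (Pi y).
Proof.
  destruct y as [y1 f]. unfold Pi; simpl. intros Ha Hf [_ [[p [Hp Hp3]] [Hz _]]].
  unfold Prob in Hp. simpl in Hp, Hz. unfold in01 in Hz.
  set (z1 := clamp y1) in *.
  apply Rnot_lt_le; intro Hlt.
  destruct (Rle_dec 0 a) as [Hpos|Hneg].
  - assert (3 * p <= list_area (mkRect (-1) 0 0 0 :: mkRect 0 z1 (-1) 1 :: nil)).
    { refine (UB _ _ _ _ _ Hp).
      - intros r [<-|[<-|[]]]; unfold proper_rect; simpl; lra.
      - intros x y [[H1 H2] Ht]. rewrite Hf in H2. unfold Theta in Ht.
        destruct (Rle_dec x 0) as [Hx0|Hx0].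
        + assert (a * x <= 0) by nra. assert (clamp (a * x) = 0) by (unfold clamp; mm).
          destruct Ht as [Ht|Ht].
          * exists (mkRect (-1) 0 0 0). split. left; auto. unfold in_rect; simpl; lra.
          * exists (mkRect 0 z1 (-1) 1). split. right; left; auto. unfold in_rect; simpl; lra.
        + exists (mkRect 0 z1 (-1) 1). split. right; left; auto. unfold in_rect; simpl; lra. }
    unfold list_area, area in H; simpl in H. lra.
  - destruct (big_K (1/2 - z1) 1 ltac:(lra) ltac:(lra)) as [K [HK HK2]].
    assert (0 < INR K) by (apply lt_0_INR; lia).
    assert (3 * p <= list_area (map (stripD K) (seq 0 K) ++ mkRect 0 z1 (-1) 0 :: nil)).
    { refine (UB _ _ _ _ _ Hp).
      - intros r Hr. apply in_app_or in Hr. destruct Hr as [Hr|[<-|[]]]. apply (stripsD_proper K); auto.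
        unfold proper_rect; simpl; lra.
      - intros x y [[H1 H2] Ht]. rewrite Hf in H2. unfold Theta in Ht.
        destruct (Rle_dec x 0) as [Hx0|Hx0].
        + assert (0 <= a * x) by nra. assert (clamp (a * x) <= a * x) by (unfold clamp; mm).
          destruct Ht as [Ht|Ht].
          * destruct (stripsD_cover K x y HK ltac:(lra) ltac:(nra)) as [r [Hr Hin]].
            exists r. split; auto. apply in_or_app; auto.
          * exists (mkRect 0 z1 (-1) 0). split. apply in_or_app; right; left; auto. unfold in_rect; simpl; lra.
        + assert (a * x <= 0) by nra. assert (clamp (a * x) = 0) by (unfold clamp; mm).
          exists (mkRect 0 z1 (-1) 0). split. apply in_or_app; right; left; auto. unfold in_rect, Theta in *; simpl; lra. }
    rewrite list_area_app, stripsD_area in H0 by auto.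
    assert (Hz0 : list_area (mkRect 0 z1 (-1) 0 :: nil) = z1) by (unfold list_area, area; simpl; ring).
    rewrite Hz0 in H0.
    assert ((INR K + 1) / (2 * INR K) = 1/2 + 1 / (2 * INR K)) by (field; lra). lra.
Qed.

Lemma clamp_in01 t : in01 (clamp t).
Proof. unfold in01, clamp; mm. Qed.

Lemma M1_elem4 : M1 (1/2, fun t => Rmax 0 (Rmin (- t) 1)).
Proof.
  split. apply meas_clampneg. split.
  - destruct (Prob_exists (fun x1 x2 => x1 <= fst (1/2, fun t : R => Rmax 0 (Rmin (- t) 1)) /\
                                      x2 <= snd (1/2, fun t : R => Rmax 0 (Rmin (- t) 1)) x1)) as [p Hp].
    exists p. split; auto. unfold Prob in Hp. simpl in Hp.
    apply Rnot_lt_le; intro Hlt.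
    destruct (big_K (1 - 3 * p) 1 ltac:(lra) ltac:(lra)) as [K [HK HK2]].
    assert (0 < INR K) by (apply lt_0_INR; lia).
    set (a := fun k => if (k <=? K)%nat then -1 + INR k / INR K else 1/2).
    set (dh := fun k => if (k <? K)%nat then 1 - INR (S k) / INR K else 0).
    set (cl := fun k => if (k <? K)%nat then 0 else -1).
    pose proof (fun H1 H2 H3 => LB_outer _ a cl dh (S K) _ H1 H2 H3 Hp) as HL.
    assert (Hs : sumK (fun k => (a (S k) - a k) * (dh k - cl k)) (S K) = 1 - 1 / (2 * INR K)).
    { simpl sumK.
      rewrite (sumK_ext _ (fun k => (/ INR K - / (INR K * INR K)) + (- / (INR K * INR K)) * INR k)).
      rewrite sumK_affine. unfold a, dh, cl.
      replace (S K <=? K)%nat with false by (symmetry; apply Nat.leb_gt; lia).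
      replace (K <=? K)%nat with true by (symmetry; apply Nat.leb_le; lia).
      replace (K <? K)%nat with false by (symmetry; apply Nat.ltb_ge; lia).
      field. lra.
      intros k Hk. unfold a, dh, cl.
      replace (S k <=? K)%nat with true by (symmetry; apply Nat.leb_le; lia).
      replace (k <=? K)%nat with true by (symmetry; apply Nat.leb_le; lia).
      replace (k <? K)%nat with true by (symmetry; apply Nat.ltb_lt; lia).
      rewrite S_INR. field. lra. }
    assert (1 - 1 / (2 * INR K) <= 3 * p); [|lra].
    rewrite <- Hs. apply HL.
    + intros k Hk. unfold a. destruct (Nat.eq_dec k K).
      * subst. replace (S K <=? K)%nat with false by (symmetry; apply Nat.leb_gt; lia).
        replace (K <=? K)%nat with true by (symmetry; apply Nat.leb_le; lia).
        replace (INR K / INR K) with 1 by (field; lra). lra.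
      * replace (S k <=? K)%nat with true by (symmetry; apply Nat.leb_le; lia).
        replace (k <=? K)%nat with true by (symmetry; apply Nat.leb_le; lia).
        destruct (INR_div_facts k K ltac:(lia)) as [_ [H1 [H2 [H3 H4]]]]. lra.
    + intros k Hk. unfold cl, dh. destruct (Nat.eq_dec k K).
      * subst. replace (K <? K)%nat with false by (symmetry; apply Nat.ltb_ge; lia). lra.
      * replace (k <? K)%nat with true by (symmetry; apply Nat.ltb_lt; lia).
        destruct (INR_div_facts k K ltac:(lia)) as [_ [H1 [H2 [H3 H4]]]]. lra.
    + intros k x y Hk. unfold a, cl, dh. destruct (Nat.eq_dec k K).
      * subst. replace (S K <=? K)%nat with false by (symmetry; apply Nat.leb_gt; lia).
        replace (K <=? K)%nat with true by (symmetry; apply Nat.leb_le; lia).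
        replace (K <? K)%nat with false by (symmetry; apply Nat.ltb_ge; lia).
        replace (INR K / INR K) with 1 by (field; lra). intros Hx Hy.
        split. split. lra. mm. unfold Theta; lra.
      * replace (S k <=? K)%nat with true by (symmetry; apply Nat.leb_le; lia).
        replace (k <=? K)%nat with true by (symmetry; apply Nat.leb_le; lia).
        replace (k <? K)%nat with true by (symmetry; apply Nat.ltb_lt; lia).
        destruct (INR_div_facts k K ltac:(lia)) as [_ [H1 [H2 [H3 H4]]]]. intros Hx Hy.
        split. split. lra. mm. unfold Theta; lra.
  - split. unfold in01; simpl; lra. apply Prob_zero. intros x y _ H. apply H. apply clamp_in01.
Qed.

Lemma clamp_val t : 0 <= t <= 1 -> clamp t = t.
Proof. intros; unfold clamp; mm. Qed.

Lemma clamp_ge t : 2/3 <= t -> 2/3 <= clamp t.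
Proof. intros; unfold clamp; mm. Qed.

Definition elem : policy := (2/3, fun t => 3/2 * t).

Lemma elem_argmin : argmin_h (inter M2 K) elem.
Proof.
  split. split. apply M2_elem. exists (3/2). split. lra. intros; reflexivity.
  intros y' [HM HK]. destruct HK as [a [Ha Hf]]. destruct (M2K_lower y' a Ha Hf HM) as [H _].
  unfold h, elem; simpl. lra.
Qed.

Lemma elem_unique y : argmin_h (inter M2 K) y -> y = elem.
Proof.
  intros [[HM HK] Hmin]. destruct HK as [a [Ha Hf]]. destruct (M2K_lower y a Ha Hf HM) as [H1 H2].
  pose proof (Hmin elem (proj1 elem_argmin)). unfold h, elem in H; simpl in H.
  assert (fst y = 2/3) by lra. specialize (H2 H0). subst a.
  destruct y as [y1 f]. simpl in *. subst y1. unfold elem. f_equal.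
  apply functional_extensionality; auto.
Qed.

Lemma Pi_elem : Pi elem = (2/3, fun t => Rmax 0 (Rmin (3/2 * t) 1)).
Proof. unfold Pi, elem; simpl. rewrite clamp_val by lra. reflexivity. Qed.

Theorem mainTheorem3 :
  phi 0 /\ phi1 1 /\ phi2 (2/3) /\ phi3 (2/3) /\ phi4 (1/2) /\
  (* (2/3, 3/2 xi1) is the unique minimizer of h over M2 cap K *)
  argmin_h (inter M2 K) (2/3, fun t => 3/2 * t) /\
  (forall y, argmin_h (inter M2 K) y -> y = (2/3, fun t => 3/2 * t)) /\
  (* its projection solves the problem defining phi3 *)
  Pi (2/3, fun t => 3/2 * t) = (2/3, fun t => Rmax 0 (Rmin (3/2 * t) 1)) /\
  image_Pi (inter M2 K) (Pi (2/3, fun t => 3/2 * t)) /\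
  h (Pi (2/3, fun t => 3/2 * t)) = 2/3 /\
  (* phi4 is attained at (1/2, clamp(-xi1)) = Pi(1/2, -xi1) *)
  (1/2, fun t => Rmax 0 (Rmin (- t) 1)) = Pi (1/2, fun t => - t) /\
  inter M1 (image_Pi K) (1/2, fun t => Rmax 0 (Rmin (- t) 1)) /\
  h (1/2, fun t => Rmax 0 (Rmin (- t) 1)) = 1/2.
Proof.
  assert (HhPi : h (Pi elem) = 2/3) by (rewrite Pi_elem; reflexivity).
  assert (Himg : image_Pi (inter M2 K) (Pi elem)) by (exists elem; split; [apply elem_argmin|reflexivity]).
  assert (Hel4 : inter M1 (image_Pi K) (1/2, fun t => Rmax 0 (Rmin (- t) 1))).
  { split. apply M1_elem4. exists (1/2, fun t => - t). split.
    exists (-1). split. lra. intros; simpl; ring.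
    unfold Pi; simpl. rewrite clamp_val by lra. reflexivity. }
  split; [|split; [|split; [|split; [|split]]]].
  - split.
    + intros v [y [[_ [_ [H _]]] ->]]. unfold h, in01 in *. lra.
    + intros m' Hm'. apply (Hm' 0). exists (0, fun _ => 1). split; auto. apply M1_elem0.
  - split.
    + intros v [y [[HM [a [Ha Hf]]] ->]]. apply (M1K_lower y a Hf HM).
    + intros m' Hm'. apply (Hm' 1). exists (1, fun _ => 0). split; auto. split. apply M1_elem1.
      exists 0. split. lra. intros; simpl; ring.
  - split.
    + intros v [z [[y [Hy ->]] ->]]. rewrite (elem_unique y Hy). lra.
    + intros m' Hm'. apply Hm'. exists (Pi elem). split; auto. exists elem. split; auto. apply elem_argmin.
  - split.
    + intros v [z [[y [[HM [a [Ha Hf]]] ->]] ->]]. destruct (M2K_lower y a Ha Hf HM) as [H _].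
      unfold h, Pi; simpl. apply clamp_ge; auto.
    + intros m' Hm'. apply Hm'. exists (Pi elem). split; auto.
  - split.
    + intros v [z [[HM [y [[a [Ha Hf]] ->]]] ->]]. apply (M1PiK_lower y a Ha Hf HM).
    + intros m' Hm'. apply Hm'. exists (1/2, fun t => Rmax 0 (Rmin (- t) 1)). split; auto.
  - split. apply elem_argmin. split. apply elem_unique. split. apply Pi_elem.
    split. apply Himg. split. apply HhPi. split.
    + unfold Pi; simpl. rewrite clamp_val by lra. reflexivity.
    + split. apply Hel4. reflexivity.
Qed.
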